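(* Let $l:G\to\Lambda$ be a complete $\delta$-hyperbolic length function on a group $G$ ($\delta\in\Lambda$, $\delta\geqslant0$). Let $A=\ker(l)=\{g: l(g)=0\}$, $X_l=G/A$ (left cosets) and $d_l(gA,hA)=l(g^{-1}h)$. Then the $\delta$-hyperbolic $\Lambda$-metric space $(X_l,d_l)$ is quasi-geodesic.
   Context: $\Lambda$ is an ordered abelian group with ordered divisible hull $\Lambda_{\mathbb{Q}}\supseteq\Lambda$. A length function on $G$ is $l:G\to\Lambda$ with $l(g)\geqslant0$, $l(1)=0$, $l(g)=l(g^{-1})$, $l(gh)\leqslant l(g)+l(h)$; $d_l$ is then a well-defined $\Lambda$-metric. Let $c(g,h)=\tfrac12(l(g)+l(h)-l(g^{-1}h))\in\Lambda_{\mathbb{Q}}$; $l$ is $\delta$-hyperbolic if $c(f,g)\geqslant\min\{c(f,h),c(g,h)\}-\delta$ for all $f,g,h$. Write $g=u\circ g_1$ if $g=ug_1$ and $l(g)=l(u)+l(g_1)$. $l$ is complete if for every $g\in G$ and every $\alpha\in\Lambda$ with $0\leqslant\alpha\leqslant l(g)$ there exist $u,g_1$ with $g=u\circ g_1$ and $l(u)=\alpha$. A $\Lambda$-metric space $(X,d)$ is quasi-geodesic if there is a constant $C\in\Lambda$, $C\geqslant0$, such that for all $x,y\in X$ there is a map $\gamma:\{t\in\Lambda:0\leqslant t\leqslant d(x,y)\}\to X$ with $\gamma(0)=x$, $\gamma(d(x,y))=y$ and $\beta-\alpha\leqslant d(\gamma(\alpha),\gamma(\beta))\leqslant\beta-\alpha+C$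 whenever $0\leqslant\alpha\leqslant\beta\leqslant d(x,y)$. *)

(* Defs.v *)
From HB Require Import structures.
From mathcomp Require Import all_boot all_order all_algebra.
From Stdlib Require Import ClassicalEpsilon.
Set Implicit Arguments. Unset Strict Implicit. Unset Printing Implicit Defensive.
Import Order.TTheory GRing.Theory Num.Theory.
Local Open Scope ring_scope.

Definition ordered_abelian_group (L : porderZmodType) : Prop :=
  total (@Order.le ring_display L) /\
  (forall x y z : L, x <= y -> x + z <= y + z).

Definition length_function (G : groupType) (L : porderZmodType) (l : G -> L) : Prop :=
  [/\ (forall g, 0 <= l g),
      l 1%g = 0,
      (forall g, l (g^-1)%g = l g) &
      (forall g h, l (g * h)%g <= l g + l h)].

(* Twice the Gromov product: 2 c(g,h) = l(g) + l(h) - l(g^-1 h), an element of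
   Lambda (c itself lives in the divisible hull Lambda_Q). *)
Definition gromov2 (G : groupType) (L : porderZmodType) (l : G -> L) (g h : G) : L :=
  l g + l h - l (g^-1 * h)%g.

(* l is delta-hyperbolic: c(f,g) >= min(c(f,h), c(g,h)) - delta, stated after
   multiplying by 2 (an order-isomorphism of Lambda_Q), so that it lives in Lambda. *)
Definition hyperbolic_length (G : groupType) (L : porderZmodType) (l : G -> L) (delta : L) : Prop :=
  forall f g h : G,
    Order.min (gromov2 l f h) (gromov2 l g h) - delta *+ 2 <= gromov2 l f g.

Definition complete_length (G : groupType) (L : porderZmodType) (l : G -> L) : Prop :=
  forall (g : G) (alpha : L), 0 <= alpha -> alpha <= l g ->
    exists u g1 : G, [/\ g = (u * g1)%g, l g = l u + l g1 & l u = alpha].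

Definition ker_length (G : groupType) (L : porderZmodType) (l : G -> L) : G -> Prop :=
  fun a => l a = 0.

Definition lcoset_of (G : groupType) (L : porderZmodType) (l : G -> L) (g : G) : G -> Prop :=
  fun x => exists a, ker_length l a /\ x = (g * a)%g.

Definition coset_space (G : groupType) (L : porderZmodType) (l : G -> L) : Type :=
  { S : G -> Prop | exists g : G, S = lcoset_of l g }.

Definition coset_rep (G : groupType) (L : porderZmodType) (l : G -> L)
  (S : coset_space l) : G :=
  proj1_sig (constructive_indefinite_description _ (proj2_sig S)).

Definition coset_dist (G : groupType) (L : porderZmodType) (l : G -> L)
  (S T : coset_space l) : L :=
  l ((coset_rep S)^-1 * coset_rep T)%g.

(* A Lambda-metric space (X,d) is quasi-geodesic.  The map gamma is given as a
   total function on Lambda; only its values on [0, d(x,y)] are constrained. *)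
Definition quasi_geodesic (X : Type) (L : porderZmodType) (d : X -> X -> L) : Prop :=
  exists C : L, 0 <= C /\
    forall x y : X, exists gamma : L -> X,
      [/\ gamma 0 = x, gamma (d x y) = y &
          forall a b : L, 0 <= a -> a <= b -> b <= d x y ->
            b - a <= d (gamma a) (gamma b) /\ d (gamma a) (gamma b) <= b - a + C].

(* Main.v *)
Require Import Defs.
From HB Require Import structures.
From mathcomp Require Import all_boot all_order all_algebra.
From Stdlib Require Import ClassicalEpsilon ProofIrrelevance FunctionalExtensionality PropExtensionality.
Import Order.TTheory GRing.Theory Num.Theory.
Set Implicit Arguments. Unset Strict Implicit.
Local Open Scope ring_scope.

Section Aux.
Variable L : porderZmodType.
Hypothesis HL : ordered_abelian_group L.

Lemma leDr (x y z : L) : x <= y -> x + z <= y + z.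
Proof. by case: HL => _ H; apply: H. Qed.

Lemma leDl (x y z : L) : x <= y -> z + x <= z + y.
Proof. by move=> h; rewrite ![z + _]addrC; apply: leDr. Qed.

Lemma leD2 (x y z w : L) : x <= y -> z <= w -> x + z <= y + w.
Proof. move=> h1 h2; have t1 := leDr z h1; have t2 := leDl y h2. exact: (le_trans t1 t2). Qed.

Lemma le_subLR (x y z : L) : x <= y + z -> x - z <= y.
Proof. by move=> h; have := leDr (- z) h; rewrite addrK. Qed.

Lemma le_subRL (x y z : L) : x - z <= y -> x <= y + z.
Proof. by move=> h; have := leDr z h; rewrite subrK. Qed.

Lemma min_le_l (x y : L) : x <= y -> Order.min x y = x.
Proof.
move=> h; rewrite /Order.min; case: ifP => // hlt.
by move: h; rewrite le_eqVlt hlt orbF => /eqP ->.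
Qed.
Lemma t1 (x y w : L) : x - y + w + (y - x) = w.
Proof. by rewrite addrAC addrA subrK subrr add0r. Qed.
Lemma t2 (z y w x : L) : z - w + w + (y - x) = z - x + y.
Proof. by rewrite subrK addrA addrAC. Qed.
Lemma t3 (a b : L) : a + b - (a + a) = b - a.
Proof. by rewrite opprD addrACA subrr add0r. Qed.
Lemma t4 (a c : L) : a + (a + c) - c = a + a.
Proof. by rewrite addrA addrK. Qed.
Lemma le_swap (x y z w : L) : x - y <= z - w -> w <= z - x + y.
Proof. by move=> h; have := leDr (y - x) (leDr w h); rewrite t1 t2. Qed.
End Aux.

Section Grp.
Variables (L : porderZmodType) (G : groupType) (l : G -> L).
Hypothesis Hl : length_function l.

Lemma l_inv0 k : l k = 0 -> l (k^-1)%g = 0.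
Proof. by case: Hl => _ _ hi _ h; rewrite hi. Qed.

Lemma l_ker_mul p w q : l p = 0 -> l q = 0 -> l (p * w * q)%g = l w.
Proof.
case: Hl => h0 h1 hi ht hp hq; apply/le_anti/andP; split.
  apply: le_trans (ht _ _) _; rewrite hq addr0.
  by apply: le_trans (ht _ _) _; rewrite hp add0r.
have e : w = ((p^-1) * (p * w * q) * q^-1)%g.
  by rewrite -!monoid.mulgA monoid.mulgV monoid.mulg1 monoid.mulKg.
rewrite {1}e.
apply: le_trans (ht _ _) _; rewrite hi hq addr0.
by apply: le_trans (ht _ _) _; rewrite hi hp add0r.
Qed.

Lemma l_mul0 a b : l a = 0 -> l b = 0 -> l (a * b)%g = 0.
Proof.
case: Hl => h0 h1 hi ht ha hb; apply/le_anti/andP; split; last exact: h0.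
by apply: le_trans (ht _ _) _; rewrite ha hb addr0.
Qed.

Lemma rep_mk (w : G) (p : exists g, lcoset_of l w = lcoset_of l g) :
  exists k, l k = 0 /\ coset_rep (exist _ (lcoset_of l w) p) = (w * k)%g.
Proof.
rewrite /coset_rep /=.
case: (constructive_indefinite_description _ _) => w' e /=.
have : lcoset_of l w' w'.
  exists 1%g; split; last by rewrite monoid.mulg1.
  by case: Hl.
by rewrite -e => -[k [hk ->]]; exists k.
Qed.
End Grp.

Theorem mainTheorem15 (L : porderZmodType) (G : groupType) (l : G -> L) (delta : L) :
  ordered_abelian_group L ->
  length_function l ->
  0 <= delta ->
  hyperbolic_length l delta ->
  complete_length l ->
  quasi_geodesic (@coset_dist G L l).
Proof.
move=> HL Hl hd Hh Hc.
have Hl' := Hl; case: Hl' => h0 h1 hi ht.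
exists (delta *+ 2); split.
  by rewrite mulr2n; apply: le_trans (leD2 HL hd hd); rewrite addr0.
move=> x y.
pose g := coset_rep x; pose h := coset_rep y.
pose f := (g^-1 * h)%g.
have df : coset_dist x y = l f by [].
pose P (alpha : L) (u : G) := exists v, [/\ f = (u * v)%g, l f = l u + l v & l u = alpha].
pose uo alpha := epsilon (inhabits 1%g) (P alpha).
pose mk (w : G) : coset_space l := exist _ (lcoset_of l w) (ex_intro _ w erefl).
pose gamma alpha := if alpha == 0 then x else if alpha == l f then y else mk (g * uo alpha)%g.
have spec : forall alpha, 0 <= alpha -> alpha <= l f ->
   exists u v k, [/\ f = (u * v)%g, l f = l u + l v, l u = alpha,
      coset_rep (gamma alpha) = (g * u * k)%g & l k = 0].
  move=> alpha ha1 ha2; rewrite /gamma.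
  case: eqP => [->|a0].
    exists 1%g, f, 1%g; split => //.
    - by rewrite monoid.mul1g.
    - by rewrite h1 add0r.
    - by rewrite !monoid.mulg1.
  case: eqP => [->|ad].
    exists f, 1%g, 1%g; split => //.
    - by rewrite monoid.mulg1.
    - by rewrite h1 addr0.
    - by rewrite monoid.mulg1 /f monoid.mulVKg.
  have [v [e1 e2 e3]] : P alpha (uo alpha).
    apply: epsilon_spec.
    have [u [v [? ? ?]]] := Hc f alpha ha1 ha2.
    by exists u, v.
  have [k [hk ek]] := rep_mk Hl (ex_intro _ (g * uo alpha)%g erefl).
  exists (uo alpha), v, k; split => //; by rewrite ek monoid.mulgA.
exists gamma; split.
- by rewrite /gamma eqxx.
- rewrite /gamma df; case: eqP => [e|]; last by rewrite eqxx.
  have Sx : proj1_sig x = lcoset_of l g :=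
    proj2_sig (constructive_indefinite_description _ (proj2_sig x)).
  have Sy : proj1_sig y = lcoset_of l h :=
    proj2_sig (constructive_indefinite_description _ (proj2_sig y)).
  have ehg : h = (g * f)%g by rewrite /f monoid.mulVKg.
  apply: eq_sig_hprop; first by move=> *; apply: proof_irrelevance.
  rewrite Sx Sy; apply: functional_extensionality => z.
  apply: propositional_extensionality; split.
    case=> a [ha ->]; exists (f^-1 * a)%g; split.
      by apply: (l_mul0 Hl) => //; apply: (l_inv0 Hl).
    by rewrite ehg -monoid.mulgA monoid.mulVKg.
  case=> a [ha ->]; exists (f * a)%g; split.
    by apply: (l_mul0 Hl).
  rewrite monoid.mulgA; congr (_ * _)%g; exact: ehg.
- move=> a b ha hab hb.
  have [u [v [k [ef1 ef2 eu erep ek]]]] := spec a ha (le_trans hab hb).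
  have [u' [v' [k' [ef1' ef2' eu' erep' ek']]]] := spec b (le_trans ha hab) hb.
  have -> : coset_dist (gamma a) (gamma b) = l (u^-1 * u')%g.
    rewrite /coset_dist erep erep' -(l_ker_mul Hl (u^-1 * u')%g (l_inv0 Hl ek) ek').
    congr (l _).
    by rewrite !monoid.invgM -!monoid.mulgA monoid.mulKg.
  split.
    apply: (le_subLR HL); rewrite -eu -eu' addrC.
    by apply: le_trans (ht _ _); rewrite monoid.mulVKg.
  have H := Hh u u' f; rewrite /gromov2 in H.
  have e1 : (u^-1 * f)%g = v by rewrite ef1 monoid.mulKg.
  have e1' : (u'^-1 * f)%g = v' by rewrite ef1' monoid.mulKg.
  rewrite e1 e1' {1}ef2 {1}ef2' !t4 eu eu' min_le_l // in H.
    by have := le_swap HL H; rewrite t3 mulr2n.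
  by apply: leD2.
Qed.
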